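(* Let $\mathsf{\Sigma}\in\mathbb{R}^{N\times N_S}$ and $\mathsf{\Lambda}\in\mathbb{R}^{N\times N_L}$ be the Star-to-RWG and Loop-to-RWG matrices of a triangular surface mesh, and for $1\le n\le N_S$ (resp. $1\le n\le N_L$) let $\mathsf{\Sigma}_n=\mathsf{\Sigma}(\mathsf{\Sigma}^{\mathrm T}\mathsf{\Sigma})^+(\mathsf{\Sigma}^{\mathrm T}\mathsf{\Sigma})_n$ (resp. $\mathsf{\Lambda}_n=\mathsf{\Lambda}(\mathsf{\Lambda}^{\mathrm T}\mathsf{\Lambda})^+(\mathsf{\Lambda}^{\mathrm T}\mathsf{\Lambda})_n$) be the filtered Star (resp. Loop) matrices (see context). Then $$\mathsf{\Sigma}_n(\mathsf{\Sigma}_n^{\mathrm T}\mathsf{\Sigma}_n)^+\mathsf{\Sigma}_n^{\mathrm T}=\mathsf{\Sigma}\big((\mathsf{\Sigma}^{\mathrm T}\mathsf{\Sigma})_n\big)^+\mathsf{\Sigma}^{\mathrm T},\qquad \mathsf{\Lambda}_n(\mathsf{\Lambda}_n^{\mathrm T}\mathsf{\Lambda}_n)^+\mathsf{\Lambda}_n^{\mathrm T}=\mathsf{\Lambda}\big((\mathsf{\Lambda}^{\mathrm T}\mathsf{\Lambda})_n\big)^+\mathsf{\Lambda}^{\mathrm T}.$$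
   Context: Consider a closed triangulated surface with $N$ edges, $N_S$ triangles and $N_L$ vertices. Each edge $m$ is shared by two triangles $c_m^+$, $c_m^-$. $[\mathsf{\Sigma}]_{mn}=1$ if cell $n$ is $c_m^+$, $-1$ if cell $n$ is $c_m^-$, $0$ otherwise. $[\mathsf{\Lambda}]_{mn}=\pm1$ when vertex $n$ is an endpoint of edge $m$ (opposite signs for the two endpoints, fixed by the orientation convention), $0$ otherwise. $^+$ denotes the Moore–Penrose pseudo-inverse. For $\mathsf{X}\in\{\mathsf{\Sigma},\mathsf{\Lambda}\}$ with $N_x$ columns, fix an SVD $\mathsf{X}=\mathsf{U}_X\mathsf{S}_X\mathsf{V}_X^{\mathrm T}$ with $\mathsf{V}_X$ orthogonal $N_x\times N_x$ and singular values $\sigma_{X,1}\ge\dots\ge\sigma_{X,N_x}\ge0$, so $\mathsf{X}^{\mathrm T}\mathsf{X}=\mathsf{V}_X\mathrm{diag}(\sigma_{X,i}^2)\mathsf{V}_X^{\mathrm T}$. For $1\le n\le N_x$, $\mathsf{L}_{X,n}$ is diagonal with $[\mathsf{L}_{X,n}]_{ii}=\sigma_{X,i}$ if $i>N_x-n$ and $0$ otherwise, and $(\mathsf{X}^{\mathrm T}\mathsf{X})_n=\mathsf{V}_X\mathsf{L}_{X,n}^2\mathsf{V}_X^{\mathrm T}$. *)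

(* Defs.v *)
From HB Require Import structures.
From mathcomp Require Import all_boot all_order all_algebra.
From mathcomp Require Import reals.
From Stdlib Require Import ClassicalEpsilon.
Set Implicit Arguments. Unset Strict Implicit. Unset Printing Implicit Defensive.
Import Order.TTheory GRing.Theory Num.Theory.
Local Open Scope ring_scope.

Section Defs.
Variable R : realType.

Definition penrose (m n : nat) (A : 'M[R]_(m, n)) (X : 'M[R]_(n, m)) : Prop :=
  [/\ A *m X *m A = A, X *m A *m X = X,
      (A *m X)^T = A *m X & (X *m A)^T = X *m A].

(* Moore-Penrose pseudo-inverse A^+ : the (unique, existing) matrix satisfying
   the Penrose conditions, selected by classical choice. *)
Definition pinv (m n : nat) (A : 'M[R]_(m, n)) : 'M[R]_(n, m) :=
  epsilon (inhabits 0) (penrose A).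

Definition star_mx (N NS : nat) (cp cm : 'I_N -> 'I_NS) : 'M[R]_(N, NS) :=
  \matrix_(m < N, k < NS)
    ((k == cp m)%:R - (k == cm m)%:R).

(* Loop-to-RWG matrix: [Lambda]_{mn} = +1 / -1 at the two endpoints v1 m, v2 m
   of edge m (orientation convention encoded by the order of v1, v2). *)
Definition loop_mx (N NL : nat) (v1 v2 : 'I_N -> 'I_NL) : 'M[R]_(N, NL) :=
  \matrix_(m < N, k < NL)
    ((k == v1 m)%:R - (k == v2 m)%:R).

Definition is_svd (N Nx : nat) (X : 'M[R]_(N, Nx)) (U : 'M[R]_N) (V : 'M[R]_Nx)
    (sigma : 'I_Nx -> R) : Prop :=
  [/\ U^T *m U = 1%:M, V^T *m V = 1%:M,
      X = U *m (\matrix_(i < N, j < Nx) (if (i == j :> nat) then sigma j else 0))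
            *m V^T,
      (forall i, 0 <= sigma i) /\
        (forall i j : 'I_Nx, (i <= j)%N -> sigma j <= sigma i) &
      X^T *m X = V *m diag_mx (\row_i (sigma i ^+ 2)) *m V^T].

(* L_{X,n}: diagonal, [L]_{ii} = sigma_i if i > Nx - n (1-based), i.e.
   Nx - n <= i with 0-based i; 0 otherwise. *)
Definition Lmx (Nx : nat) (sigma : 'I_Nx -> R) (n : nat) : 'M[R]_Nx :=
  diag_mx (\row_i (if (Nx - n <= i)%N then sigma i else 0)).

Definition gram_n (Nx : nat) (V : 'M[R]_Nx) (sigma : 'I_Nx -> R) (n : nat)
    : 'M[R]_Nx :=
  V *m (Lmx sigma n *m Lmx sigma n) *m V^T.

Definition filtered (N Nx : nat) (X : 'M[R]_(N, Nx)) (V : 'M[R]_Nx)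
    (sigma : 'I_Nx -> R) (n : nat) : 'M[R]_(N, Nx) :=
  X *m pinv (X^T *m X) *m gram_n V sigma n.

End Defs.

(* Main.v *)
Require Import Defs.
From HB Require Import structures.
From mathcomp Require Import all_boot all_order all_algebra.
From mathcomp Require Import reals.
From mathcomp Require Import ring.
From Stdlib Require Import ClassicalEpsilon.
Import Order.TTheory GRing.Theory Num.Theory.
Local Open Scope ring_scope.
Set Implicit Arguments. Unset Strict Implicit. Unset Printing Implicit Defensive.

Section H.
Variable R : realType.

Lemma penrose_uniq m n (A : 'M[R]_(m, n)) X Y :
  penrose A X -> penrose A Y -> X = Y.
Proof.
case=> h1 h2 h3 h4 [k1 k2 k3 k4].
have EX : X = X *m A *m Y.
  transitivity (X *m (A *m X)^T *m (A *m Y)^T).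
    by rewrite -mulmxA -trmx_mul mulmxA k1 h3 mulmxA h2.
  by rewrite h3 k3 !mulmxA h2.
have EY : Y = X *m A *m Y.
  transitivity ((X *m A)^T *m (Y *m A)^T *m Y).
    by rewrite -trmx_mul -mulmxA (mulmxA A X A) h1 k4 k2.
  by rewrite h4 k4 -(mulmxA X A (Y *m A)) (mulmxA A Y A) k1.
by rewrite EX -EY.
Qed.

Lemma pinv_eq m n (A : 'M[R]_(m, n)) X : penrose A X -> pinv A = X.
Proof.
move=> hX; apply: (@penrose_uniq _ _ A _ X _ hX).
rewrite /pinv; apply: epsilon_spec; by exists X.
Qed.

Definition dg k (f : 'I_k -> R) : 'M[R]_k := diag_mx (\row_i f i).

Lemma dgM k (f g : 'I_k -> R) : dg f *m dg g = dg (fun i => f i * g i).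
Proof.
apply/matrixP=> i j; rewrite /dg mul_diag_mx !mxE.
by case: (i == j); rewrite ?mulr1n ?mulr0n ?mulr0.
Qed.

Definition cj k (V : 'M[R]_k) f := V *m dg f *m V^T.

Lemma cjM k (V : 'M[R]_k) f g : V^T *m V = 1%:M ->
  cj V f *m cj V g = cj V (fun i => f i * g i).
Proof.
move=> hV; rewrite /cj -!mulmxA (mulmxA V^T) hV mul1mx.
by rewrite !mulmxA -(mulmxA V) dgM.
Qed.

Lemma cjT k (V : 'M[R]_k) f : (cj V f)^T = cj V f.
Proof. by rewrite /cj !trmx_mul trmxK tr_diag_mx mulmxA. Qed.

Lemma cj_ext k (V : 'M[R]_k) f g : (forall i, f i = g i) -> cj V f = cj V g.
Proof. by move=> e; rewrite /cj /dg; congr (_ *m diag_mx _ *m _); apply/rowP=> i; rewrite !mxE e. Qed.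

Lemma pinv_cj k (V : 'M[R]_k) f : V^T *m V = 1%:M ->
  pinv (cj V f) = cj V (fun i => (f i)^-1).
Proof.
move=> hV; apply: pinv_eq; split; rewrite ?cjM ?cjT ?cjM //;
  apply: cj_ext => i; have [->|nz] := eqVneq (f i) 0;
  rewrite ?invr0 ?mulr0 ?mul0r // ?mulfV ?mulVf // ?mul1r ?mulr1 //.
Qed.
End H.

Section M.
Variable R : realType.
Lemma main_gen N Nx (X : 'M[R]_(N,Nx)) U V sigma n : is_svd X U V sigma ->
  let Xn := filtered X V sigma n in
  Xn *m pinv (Xn^T *m Xn) *m Xn^T = X *m pinv (gram_n V sigma n) *m X^T.
Proof.
case=> _ hV _ _ hG /=.
pose l := fun i : 'I_Nx => if (Nx - n <= i)%N then sigma i else 0.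
have eG : X^T *m X = cj V (fun i => sigma i ^+ 2) by rewrite hG.
have eGn : gram_n V sigma n = cj V (fun i => l i * l i).
  by rewrite /gram_n /cj -dgM.
pose a := fun i => (sigma i ^+ 2)^-1 * (l i * l i).
have eXn : filtered X V sigma n = X *m cj V a.
  by rewrite /filtered eG pinv_cj // eGn -mulmxA cjM.
have eT : (X *m cj V a)^T = cj V a *m X^T by rewrite trmx_mul cjT.
rewrite eXn eT.
have -> : cj V a *m X^T *m (X *m cj V a) = cj V (fun i => a i * (sigma i ^+ 2) * a i).
  by rewrite mulmxA -(mulmxA (cj V a)) eG !cjM.
have -> : cj V (fun i => a i * (sigma i ^+ 2) * a i) = cj V (fun i => l i * l i).
  apply: cj_ext => i; rewrite /a /l; case: ifP => _; last by rewrite !mulr0.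
  have [->|nz] := eqVneq (sigma i) 0; first by rewrite !mulr0.
  by field.
rewrite eGn !pinv_cj //.
have E : cj V a *m cj V (fun i => (l i * l i)^-1) *m cj V a = cj V (fun i => (l i * l i)^-1).
  rewrite !cjM //; apply: cj_ext => i; rewrite /a /l.
  case: ifP => _; first last.
    by rewrite !(mulr0, mul0r, invr0).
  have [->|nz] := eqVneq (sigma i) 0; first by rewrite !(mulr0, mul0r, invr0, expr0n).
  by field.
by rewrite -{2}E !mulmxA.
Qed.
End M.

Unset Implicit Arguments.
Theorem mainTheorem4 (R : realType) (N NS NL : nat)
    (cp cm : 'I_N -> 'I_NS) (v1 v2 : 'I_N -> 'I_NL) :
  (forall m, cp m != cm m) ->
  (forall m, v1 m != v2 m) ->
  (forall (U : 'M[R]_N) (V : 'M[R]_NS) (sigma : 'I_NS -> R),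
     is_svd (star_mx R cp cm) U V sigma ->
     forall n : nat, (1 <= n <= NS)%N ->
       let Sn := filtered (star_mx R cp cm) V sigma n in
       Sn *m pinv (Sn^T *m Sn) *m Sn^T =
       star_mx R cp cm *m pinv (gram_n V sigma n) *m (star_mx R cp cm)^T) /\
  (forall (U : 'M[R]_N) (V : 'M[R]_NL) (sigma : 'I_NL -> R),
     is_svd (loop_mx R v1 v2) U V sigma ->
     forall n : nat, (1 <= n <= NL)%N ->
       let Ln := filtered (loop_mx R v1 v2) V sigma n in
       Ln *m pinv (Ln^T *m Ln) *m Ln^T =
       loop_mx R v1 v2 *m pinv (gram_n V sigma n) *m (loop_mx R v1 v2)^T).
Proof.
move=> _ _; split=> U V sigma hs n _; exact: (main_gen n hs).
Qed.
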